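(* Let $(\mathcal{X},c)$ be a metric space with diameter at most $1$, let $\mu,\nu$ be probability distributions on $\mathcal{X}$, and let $p\ge1$. Then $\mathrm{RPW}_{p,0}(\mu,\nu)=\|\mu-\nu\|_{\mathrm{TV}}$.
   Context: $c(x,y)\le 1$ for all $x,y$; distributions are Borel probability measures. For $p\in[1,\infty)$ and $\alpha\in[0,1]$, a partial transport plan of mass $\alpha$ between $\mu,\nu$ is a nonnegative measure $\gamma$ on $\mathcal{X}\times\mathcal{X}$ of total mass $\alpha$ with first marginal $\le\mu$ and second marginal $\le\nu$ (setwise); its cost is $w_p(\gamma)=(\int c^p\,d\gamma)^{1/p}$, and $W_{p,\alpha}(\mu,\nu)$ is the infimum of $w_p(\gamma)$ over such $\gamma$. For $k\ge0$, $\mathrm{RPW}_{p,k}(\mu,\nu)=\inf\{\varepsilon\in[0,1]: W_{p,1-\varepsilon}(\mu,\nu)\le k\varepsilon\}$. $\|\mu-\nu\|_{\mathrm{TV}}=\sup_A|\mu(A)-\nu(A)|$ is the total variation distance. *)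

(* Defs.v *)
From HB Require Import structures.
From mathcomp Require Import all_boot all_order all_algebra.
From mathcomp Require Import all_classical all_reals all_analysis.
Set Implicit Arguments. Unset Strict Implicit. Unset Printing Implicit Defensive.
Import Order.TTheory GRing.Theory Num.Theory.
Local Open Scope classical_set_scope.
Local Open Scope ring_scope.

Section RPW.
Context {R : realType} {X : pointedType} (c : X -> X -> R).

Definition is_metric : Prop :=
  [/\ forall x y, c x y = 0 <-> x = y,
      forall x y, c x y = c y x &
      forall x y z, c x z <= c x y + c y z].

Definition c_open (U : set X) : Prop :=
  forall x, U x -> exists2 r : R, 0 < r & [set y | c x y < r] `<=` U.

Definition c_open2 (U : set (X * X)) : Prop :=
  forall z, U z -> exists2 r : R, 0 < r &
    [set y | c z.1 y < r] `*` [set y | c z.2 y < r] `<=` U.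

Definition BX := g_sigma_algebraType c_open.
Definition BXX := g_sigma_algebraType c_open2.

Definition partial_plan (mu nu : {measure set BX -> \bar R})
  (alpha : R) (gam : {measure set BXX -> \bar R}) : Prop :=
  [/\ gam setT = alpha%:E,
      forall A : set BX, measurable A -> gam (A `*` setT) <= mu A &
      forall A : set BX, measurable A -> gam (setT `*` A) <= nu A]%E.

Definition wp (p : R) (gam : {measure set BXX -> \bar R}) : \bar R :=
  poweR (\int[gam]_z ((c z.1 z.2) `^ p)%:E)%E p^-1.

Definition Wpa (p alpha : R) (mu nu : {measure set BX -> \bar R}) : \bar R :=
  ereal_inf [set wp p gam | gam in partial_plan mu nu alpha].

Definition RPW (p k : R) (mu nu : {measure set BX -> \bar R}) : R :=
  inf [set eps : R | 0 <= eps <= 1 /\ (Wpa p (1 - eps) mu nu <= (k * eps)%:E)%E].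

Definition TV (mu nu : {measure set BX -> \bar R}) : R :=
  sup [set `|fine (mu A) - fine (nu A)| | A in (@measurable _ BX)].

End RPW.
Arguments Wpa {R X} c p alpha mu nu.
Arguments RPW {R X} c p k mu nu.
Arguments TV {R X} c mu nu.
Arguments partial_plan {R X} c mu nu alpha gam.
Arguments wp {R X} c p gam.

(* Main.v *)
Require Import Defs.
From HB Require Import structures.
From mathcomp Require Import all_boot all_order all_algebra.
From mathcomp Require Import all_classical all_reals all_analysis.
From mathcomp Require Import ring lra measurable_realfun.
Import Order.TTheory GRing.Theory Num.Theory.
Local Open Scope classical_set_scope.
Local Open Scope ring_scope.

Set Implicit Arguments. Unset Strict Implicit. Unset Printing Implicit Defensive.


Section Aux.
Context {R : realType} {X : pointedType} (c : X -> X -> R) (hc : is_metric c).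

Let c0 x : c x x = 0. Proof. by case: hc => h _ _; apply/h. Qed.
Let cC x y : c x y = c y x. Proof. by case: hc. Qed.
Let ctri x y z : c x z <= c x y + c y z. Proof. by case: hc. Qed.
Lemma c_ge0 x y : 0 <= c x y.
Proof. have := ctri x y x; rewrite c0 cC -mulr2n => h.
by rewrite -(@pmulrn_lge0 _ _ 2). Qed.

Lemma open_meas (U : set X) : c_open c U -> measurable (U : set (BX c)).
Proof. by move=> oU; apply: sub_sigma_algebra. Qed.

Lemma open2_meas (U : set (X * X)) : c_open2 c U -> measurable (U : set (BXX c)).
Proof. by move=> oU; apply: sub_sigma_algebra. Qed.

Lemma mfst : measurable_fun setT (fst : BXX c -> BX c).
Proof.
apply: (@measurability _ _ (BXX c) (BX c) setT fst (c_open c) erefl) => //.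
move=> _ [B oB <-]; apply: open2_meas; rewrite setTI => z /= Bz.
have [r r0 hr] := oB _ Bz; exists r => // y [/= h1 _]; exact: hr.
Qed.

Lemma msnd : measurable_fun setT (snd : BXX c -> BX c).
Proof.
apply: (@measurability _ _ (BXX c) (BX c) setT snd (c_open c) erefl) => //.
move=> _ [B oB <-]; apply: open2_meas; rewrite setTI => z /= Bz.
have [r r0 hr] := oB _ Bz; exists r => // y [/= _ h2]; exact: hr.
Qed.

Lemma mdiag : measurable_fun setT ((fun x => (x, x)) : BX c -> BXX c).
Proof.
apply: (@measurability _ _ (BX c) (BXX c) setT (fun x => (x, x)) (c_open2 c) erefl) => //.
move=> _ [B oB <-]; apply: open_meas; rewrite setTI => x /= Bx.
have [r r0 hr] := oB _ Bx; exists r => // y /= h; exact: hr.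
Qed.

Lemma mc : measurable_fun setT ((fun z => c z.1 z.2) : BXX c -> R).
Proof.
apply: (measurability _ (measurable_realfun.RGenOInfty.measurableE R)) => //.
move=> _ [_ [x ->] <-]; apply: open2_meas; rewrite setTI => z /=.
rewrite in_itv /= andbT => xz.
exists ((c z.1 z.2 - x) / 2); first by rewrite divr_gt0 // subr_gt0.
move=> [y1 y2] [/= h1 h2]; rewrite /= in_itv /= andbT.
have t1 := ctri z.1 y1 z.2; have t2 := ctri y1 y2 z.2.
rewrite (cC y2) in t2. lra.
Qed.

End Aux.


Section Upper.
Context {R : realType} {X : pointedType} (c : X -> X -> R) (hc : is_metric c).
Context (mu nu : probability (BX c) R).

Definition sigc := cadd (charge_of_finite_measure mu) (copp (charge_of_finite_measure nu)).

Lemma sigcE A : sigc A = (mu A - nu A)%E.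
Proof. by []. Qed.

Context (P N : set (BX c)) (hPN : hahn_decomposition sigc P N).

Let mP : measurable P. Proof. by case: hPN => -[]. Qed.
Let mN : measurable N. Proof. by case: hPN => _ []. Qed.

Let rho : {measure set BX c -> \bar R} := measure_add (mrestr nu mP) (mrestr mu mN).

Let map := pushforward rho (fun x : BX c => ((x, x) : BXX c)).

Let map0 : map set0 = 0%E. Proof. rewrite /map /pushforward preimage_set0; exact: measure0. Qed.
Let map_ge0 A : (0 <= map A)%E. Proof. rewrite /map /pushforward; exact: measure_ge0. Qed.
Let map_sigma_additive : semi_sigma_additive map.
Proof.
move=> F mF tF mUF; rewrite /map /pushforward preimage_bigcup.
apply: measure_semi_sigma_additive.
- by move=> n; rewrite -[X in measurable X]setTI; apply: (@mdiag _ _ c measurableT); exact: mF.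
- apply/trivIsetP => /= i j _ _ ij; rewrite -preimage_setI.
  by move/trivIsetP : tF => /(_ _ _ _ _ ij) ->//; rewrite preimage_set0.
- by rewrite -preimage_bigcup -[X in measurable X]setTI; apply: (@mdiag _ _ c measurableT); exact: mUF.
Qed.

HB.instance Definition _ := isMeasure.Build _ _ _ map
  map0 map_ge0 map_sigma_additive.

Definition gam : {measure set BXX c -> \bar R} := map.


Let diag := (fun x : BX c => ((x, x) : BXX c)).

Lemma gamE B : gam B = (nu (diag @^-1` B `&` P) + mu (diag @^-1` B `&` N))%E.
Proof. exact: (measure_addE (mrestr nu mP) (mrestr mu mN) (diag @^-1` B)). Qed.

Let posP A : measurable A -> A `<=` P -> (nu A <= mu A)%E.
Proof.
move=> mA AP; case: hPN => -[_ h] _ _ _.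
have : (0 <= mu A - nu A)%E := h A mA AP.
by rewrite sube_ge0 // fin_num_measure.
Qed.

Let negN A : measurable A -> A `<=` N -> (mu A <= nu A)%E.
Proof.
move=> mA AN; case: hPN => _ [_ h] _ _.
have : (mu A - nu A <= 0)%E := h A mA AN.
by rewrite sube_le0 // fin_num_measure.
Qed.

Let splitPN (m : {measure set BX c -> \bar R}) A : measurable A ->
  m A = (m (A `&` P) + m (A `&` N))%E.
Proof.
move=> mA; case: hPN => _ _ PN PN0.
rewrite -measureU; [|exact: measurableI|exact: measurableI|].
- by rewrite -setIUr PN setIT.
- by rewrite setIACA setIid PN0 setI0.
Qed.

Lemma gam_setT : gam setT = (nu P + mu N)%E.
Proof. by rewrite gamE preimage_setT !setTI. Qed.

Lemma gam_fst (A : set (BX c)) : measurable A -> (gam (A `*` setT) <= mu A)%E.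
Proof.
move=> mA; rewrite gamE (splitPN mu mA).
have -> : diag @^-1` (A `*` setT) = A by apply/seteqP; split => x //=; case.
apply: leeD => //; apply: posP; [exact: measurableI|exact: subIsetr].
Qed.

Lemma gam_snd (A : set (BX c)) : measurable A -> (gam (setT `*` A) <= nu A)%E.
Proof.
move=> mA; rewrite gamE (splitPN nu mA).
have -> : diag @^-1` (setT `*` A) = A by apply/seteqP; split => x //=; case.
apply: leeD => //; apply: negN; [exact: measurableI|exact: subIsetr].
Qed.

Lemma mcp (p : R) : measurable_fun setT (fun z : BXX c => ((c z.1 z.2) `^ p)%:E).
Proof.
apply/measurable_EFinP; apply: (measurableT_comp (measurable_powR p)).
exact: (mc hc).
Qed.

Lemma gam_int (p : R) : p != 0 -> (\int[gam]_z ((c z.1 z.2) `^ p)%:E = 0)%E.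
Proof.
move=> p0.
have -> : gam = pushforward rho diag :> (set (BXX c) -> \bar R) by [].
rewrite ge0_integral_pushforward //; last 2 first.
all: try (exact: mcp). all: try (by move=> z _; rewrite lee_fin powR_ge0).
  rewrite (eq_integral (fun _ => 0%E)) ?integral0 // => x _ /=.
  by case: hc => h _ _; rewrite (proj2 (h x x) erefl) powR0.
rewrite /diag; exact: (@mdiag _ _ c).
Qed.

End Upper.


Section Reg.
Context {R : realType} {X : pointedType} (c : X -> X -> R) (hc : is_metric c).
Context (m : probability (BX c) R).

Lemma dec_to0 (G : nat -> set (BX c)) : (forall n, measurable (G n)) ->
  (forall n k, (n <= k)%N -> G k `<=` G n) -> \bigcap_n G n = set0 ->
  forall e : R, 0 < e -> exists n, (m (G n) <= e%:E)%E.
Proof.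
move=> mG hG G0 e e0.
have h : (m \o G) x @[x --> \oo] --> m (\bigcap_n G n).
  apply: nonincreasing_cvg_mu => //.
  - by apply: (le_lt_trans (probability_le1 m (mG 0%N))); exact: ltry.
  - exact: bigcapT_measurable.
  - by move=> n k nk; apply/subsetPset; exact: hG.
rewrite G0 measure0 in h; move/fine_cvgP: h => [_ h].
have [N _ hN] := cvgr0_norm_lt _ h e e0.
exists N; have := hN N (leqnn N); rewrite /= => hl.
rewrite -[m (G N)]fineK ?fin_num_measure // lee_fin.
by apply: le_trans (ltW hl); exact: ler_norm.
Qed.


Lemma series_bound (B : set (BX c)) (G : nat -> set (BX c)) (e : R) : 0 <= e ->
  measurable B -> (forall n, measurable (G n)) -> B `<=` \bigcup_n G n ->
  (forall n, m (G n) <= (e / (2 ^ n.+1)%:R)%:E)%E -> (m B <= e%:E)%E.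
Proof.
move=> e0 mB mG BG hG.
apply: le_trans (measure_sigma_subadditive m mG mB BG) _.
apply: le_trans (_ : (\sum_(0 <= i <oo | xpredT i)
   ((fun _ => 0%E) i + (e / (2 ^ i.+1)%:R)%:E) <= _)%E).
  apply: (@lee_nneseries R (fun n => m (G n)) (fun i => 0 + (e / (2 ^ i.+1)%:R)%:E)%E xpredT 0%N) => // n _; rewrite add0e; exact: hG.
apply: le_trans (epsilon_trick _ _ _) _ => //.
by rewrite eseries0 // add0e.
Qed.


Let c0 x : c x x = 0. Proof. by case: hc => h _ _; apply/h. Qed.
Let cC x y : c x y = c y x. Proof. by case: hc. Qed.
Let ctri x y z : c x z <= c x y + c y z. Proof. by case: hc. Qed.

Definition cclosed (F : set X) := c_open c (~` F).

Lemma cclosed_meas (F : set X) : cclosed F -> measurable (F : set (BX c)).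
Proof. by move=> cF; rewrite -[F]setCK; apply: measurableC; exact: open_meas. Qed.

Lemma cclosedU (F G : set X) : cclosed F -> cclosed G -> cclosed (F `|` G).
Proof.
move=> cF cG; rewrite /cclosed setCU => x [Fx Gx].
have [r1 r10 h1] := cF x Fx; have [r2 r20 h2] := cG x Gx.
exists (Num.min r1 r2); first by rewrite lt_min r10 r20.
move=> y /= hy; rewrite lt_min in hy; case/andP: hy => hy1 hy2.
by split; [exact: h1|exact: h2].
Qed.

Lemma cclosed0 : cclosed set0.
Proof. by rewrite /cclosed setC0 => x _; exists 1 => //. Qed.

Lemma cclosedT : cclosed setT.
Proof. by rewrite /cclosed setCT => x. Qed.

Lemma cclosed_bigU (F : nat -> set X) N : (forall n, cclosed (F n)) ->
  cclosed (\bigcup_(k < N) F k).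
Proof.
move=> cF; rewrite bigcup_mkord; elim: N => [|N IH]; first by rewrite big_ord0; exact: cclosed0.
by rewrite big_ord_recr /=; apply: cclosedU.
Qed.

Lemma cclosed_bigI (F : nat -> set X) : (forall n, cclosed (F n)) ->
  cclosed (\bigcap_n F n).
Proof.
move=> cF; rewrite /cclosed setC_bigcap => x [n _ Fx].
have [r r0 h] := cF n x Fx; exists r => // y /h Fy; by exists n.
Qed.

Definition inner (B : set (BX c)) := forall e : R, 0 < e ->
  exists F, [/\ cclosed F, F `<=` B & (m (B `\` F) <= e%:E)%E].

Definition good (A : set (BX c)) := [/\ measurable A, inner A & inner (~` A)].

Lemma inner_closed (F : set (BX c)) : cclosed F -> inner F.
Proof. by move=> cF e e0; exists F; split => //; rewrite setDv measure0 lee_fin ltW. Qed.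

Lemma good_open (U : set X) : c_open c U -> good U.
Proof.
move=> oU; split; first exact: open_meas.
- move=> e e0.
  pose F n := [set x | forall y, ~ U y -> (n.+1%:R)^-1 <= c x y].
  have cF n : cclosed (F n).
    move=> x /= /existsNP [y /not_implyP [Uy hy]].
    move/negP: hy; rewrite -ltNge => hy.
    exists (n.+1%:R^-1 - c x y); first by rewrite subr_gt0.
    move=> z /= hz hFz; have := hFz y Uy.
    have := ctri z x y; rewrite (cC z x) => t1 t2.
    rewrite ltrBrDr in hz.
    by have := lt_le_trans (le_lt_trans t1 hz) t2; rewrite ltxx.
  have FU n : F n `<=` U.
    move=> x Fx; apply: contrapT => Ux; have := Fx x Ux; rewrite c0.
    by rewrite leNgt invr_gt0 ltr0Sn.
  have mF n : measurable (F n : set (BX c)) by apply: cclosed_meas.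
  have [n hn] : exists n, (m (U `\` F n) <= e%:E)%E.
    apply: dec_to0 => //.
    - by move=> n; apply: measurableD => //; exact: open_meas.
    - move=> n k nk x [Ux nFx]; split => // Fx; apply: nFx => y Uy.
      apply: le_trans (Fx y Uy); rewrite lef_pV2 ?posrE ?ltr0Sn //.
      by rewrite ler_nat ltnS.
    - apply/seteqP; split => // x /= hx.
      have [Ux _] := hx 0%N I.
      have [r r0 hr] := oU x Ux.
      have [n n1e] : exists n, n.+1%:R^-1 < r.
        exists (Num.truncn r^-1).
        by rewrite -ltf_pV2 ?(posrE,divr_gt0)// invrK truncnS_gt.
      have [_ nF] := hx n I; apply: nF => y Uy.
      rewrite leNgt; apply/negP => hy; apply: Uy; apply: hr => /=.
      exact: lt_trans hy n1e.
  by exists (F n); split.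
- by apply: inner_closed; rewrite /cclosed setCK.
Qed.


Lemma inner0 : inner set0.
Proof. by apply: inner_closed; exact: cclosed0. Qed.

Lemma innerT : inner setT.
Proof. by apply: inner_closed; exact: cclosedT. Qed.

Lemma good_sigma : sigma_algebra setT good.
Proof.
split.
- split => //; first exact: inner0.
  by rewrite setC0; exact: innerT.
- move=> A [mA iA iCA]; rewrite setTD; split => //.
  + exact: measurableC.
  + by rewrite setCK.
- move=> A gA.
  have mA n : measurable (A n) by case: (gA n).
  have mU : measurable (\bigcup_k A k) by exact: bigcupT_measurable.
  split => //.
  + move=> e e0.
    have e20 : 0 < e / 2 by rewrite divr_gt0.
    have : forall n, exists F, [/\ cclosed F, F `<=` A n &
        (m (A n `\` F) <= ((e / 2) / (2 ^ n.+1)%:R)%:E)%E].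
      move=> n; case: (gA n) => _ iA _; apply: iA.
      by rewrite divr_gt0 // ltr0n expn_gt0.
    move=> /choice [F hF].
    have cF n : cclosed (F n) by case: (hF n).
    have mF n : measurable (F n : set (BX c)) by apply: cclosed_meas.
    have [N hN] : exists N, (m (\bigcup_k A k `\` \bigcup_(k < N) A k) <= (e / 2)%:E)%E.
      apply: dec_to0 => //.
      - move=> N; apply: measurableD => //; rewrite bigcup_mkord.
        by apply: bigsetU_measurable => k _.
      - move=> n k nk x [Ax nAx]; split => // -[j /= jn Ajx]; apply: nAx.
        by exists j => //=; apply: leq_trans jn nk.
      - apply/seteqP; split => // x /= hx.
        have [[j _ Ajx] _] := hx 0%N I.
        by have [_ ] := hx j.+1 I; apply; exists j => //=.
    exists (\bigcup_(k < N) F k); split.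
    * exact: cclosed_bigU.
    * by move=> x [k _ Fkx]; exists k => //; case: (hF k) => _ /(_ x Fkx).
    * have mFN : measurable (\bigcup_(k < N) F k : set (BX c)).
        by rewrite bigcup_mkord; apply: bigsetU_measurable => k _.
      have mAN : measurable (\bigcup_(k < N) A k : set (BX c)).
        by rewrite bigcup_mkord; apply: bigsetU_measurable => k _.
      have mD n : measurable (A n `\` F n) by apply: measurableD.
      have mB : measurable (\bigcup_n (A n `\` F n)) by exact: bigcupT_measurable.
      apply: (@le_trans _ _ (m ((\bigcup_k A k `\` \bigcup_(k < N) A k) `|`
                               \bigcup_n (A n `\` F n)))).
        apply: le_measure; rewrite ?inE.
        - by apply: measurableD.
        - by apply: measurableU => //; apply: measurableD.
        - move=> x [[j _ Ajx] nFx].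
          case: (pselect ((\bigcup_(k < N) A k) x)) => [[k /= kN Akx]|nAx].
            right; exists k => //; split => // Fkx; apply: nFx; by exists k.
          by left; split => //; exists j.
      apply: le_trans (measureU2 _ _ _) _; first by apply: measurableD.
        by [].
      rewrite [e]splitr EFinD; apply: leeD => //.
      apply: (series_bound (G := fun n => A n `\` F n) (ltW e20)) => //; by move=> n; case: (hF n).
  + move=> e e0.
    have : forall n, exists F, [/\ cclosed F, F `<=` ~` A n &
        (m (~` A n `\` F) <= (e / (2 ^ n.+1)%:R)%:E)%E].
      move=> n; case: (gA n) => _ _ iA; apply: iA.
      by rewrite divr_gt0 // ltr0n expn_gt0.
    move=> /choice [F hF].
    have cF n : cclosed (F n) by case: (hF n).
    have mF n : measurable (F n : set (BX c)) by apply: cclosed_meas.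
    exists (\bigcap_n F n); split.
    * exact: cclosed_bigI.
    * move=> x Fx [k _ Akx]; case: (hF k) => _ /(_ x (Fx k I)); exact.
    * apply: (series_bound (G := fun n => ~` A n `\` F n) (ltW e0)).
      - apply: measurableD; first exact: measurableC.
        by apply: bigcapT_measurable.
      - by move=> n; apply: measurableD => //; exact: measurableC.
      - move=> x [nAx /= nFx]; have [k _ nFkx] : exists2 k, setT k & ~ F k x by apply: contrapT => h; apply: nFx => k _; apply: contrapT => hk; apply: h; exists k.
        exists k => //; split; last exact: nFkx.
        move=> Akx; apply: nAx; exists k => //.
      - by move=> n; case: (hF n).
Qed.

Lemma reg (A : set (BX c)) : measurable A -> inner A.
Proof.
move=> mA.
have : <<s c_open c >> `<=` good.
  apply: smallest_sub; first exact: good_sigma.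
  by move=> U oU; apply: good_open.
by move=> /(_ A mA) [].
Qed.

End Reg.


Section Lower.
Context {R : realType} {X : pointedType} (c : X -> X -> R) (hc : is_metric c).
Context (mu nu : probability (BX c) R) (p : R) (hp : 1 <= p) (eps : R).
Hypothesis hW : (Wpa c p (1 - eps) mu nu <= 0)%E.

Let p0 : 0 < p. Proof. exact: lt_le_trans ltr01 hp. Qed.

Lemma small_plan (d : R) : 0 < d -> exists gam, partial_plan c mu nu (1 - eps) gam /\
  (\int[gam]_z ((c z.1 z.2) `^ p)%:E <= d%:E)%E.
Proof.
move=> d0.
have pi0 : 0 < p^-1 by rewrite invr_gt0.
have : (Wpa c p (1 - eps) mu nu < (d `^ p^-1)%:E)%E.
  by apply: le_lt_trans hW _; rewrite lte_fin powR_gt0.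
move=> /ereal_inf_lt [_ [gam pg <-]] hlt; exists gam; split => //.
move: hlt; rewrite /wp.
have : (0 <= \int[gam]_z ((c z.1 z.2) `^ p)%:E)%E.
  by apply: integral_ge0 => z _; rewrite lee_fin powR_ge0.
case: (\int[gam]_z _)%E => [i| |] //; last first.
  by move=> _; rewrite poweRyr ?ltNge ?leey // gt_eqF.
rewrite lee_fin poweR_EFin lte_fin lee_fin => i0 hi.
rewrite leNgt; apply/negP => di.
have := ge0_ler_powR (ltW pi0) (x := d) (y := i).
rewrite !nnegrE (ltW d0) i0 (ltW di) => /(_ isT isT isT).
by rewrite leNgt hi.
Qed.


Let c0 x : c x x = 0. Proof. by case: hc => h _ _; apply/h. Qed.
Let cC x y : c x y = c y x. Proof. by case: hc. Qed.
Let ctri x y z : c x z <= c x y + c y z. Proof. by case: hc. Qed.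


Definition nbh (F : set X) (t : R) := [set y | exists2 x, F x & c x y < t].

Lemma nbh_open F t : c_open c (nbh F t).
Proof.
move=> y [x Fx hxy]; exists (t - c x y); first by rewrite subr_gt0.
move=> z /= hz; exists x => //; have := ctri x y z.
rewrite ltrBrDl in hz; move=> h; exact: le_lt_trans h hz.
Qed.

Lemma lowerA (A : set (BX c)) : measurable A -> fine (mu A) - fine (nu A) <= eps.
Proof.
move=> mA; apply/ler_addgt0Pr => e e0.
have e30 : 0 < e / 3 by rewrite divr_gt0.
have [F [cF FA hF]] := @reg R X c hc mu A mA _ e30.
have mF : measurable (F : set (BX c)) by apply: cclosed_meas.
pose G n : set (BX c) := nbh F (n.+1%:R^-1) `\` F.
have mG n : measurable (G n).
  by apply: measurableD => //; apply: open_meas; exact: nbh_open.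
have [n hn] : exists n, (nu (G n) <= (e / 3)%:E)%E.
  apply: dec_to0 => //.
  - move=> i k ik y [[x Fx hxy] nFy]; split => //; exists x => //.
    apply: lt_le_trans hxy _; rewrite lef_pV2 ?posrE ?ltr0Sn //.
    by rewrite ler_nat ltnS.
  - apply/seteqP; split => // y /= hy.
    have [_ nFy] := hy 0%N I.
    have [r r0 hr] := cF y nFy.
    have [k k1e] : exists k, k.+1%:R^-1 < r.
      exists (Num.truncn r^-1).
      by rewrite -ltf_pV2 ?(posrE,divr_gt0)// invrK truncnS_gt.
    have [[x Fx hxy] _] := hy k I.
    have : (~` F) x by apply: hr => /=; rewrite cC; exact: lt_trans hxy k1e.
    by [].
pose t : R := n.+1%:R^-1.
have t0 : 0 < t by rewrite invr_gt0 ltr0Sn.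
have tp0 : 0 < t `^ p by rewrite powR_gt0.
have [gam [[gT gfst gsnd] hint]] := small_plan (mulr_gt0 e30 tp0).
pose K := [set z : BXX c | t <= c z.1 z.2].
have mK : measurable K.
  have -> : K = (fun z : BXX c => c z.1 z.2) @^-1` `[t, +oo[.
    by apply/seteqP; split => z /=; rewrite in_itv /= andbT.
  rewrite -[X in measurable X]setTI.
  exact: (mc hc measurableT (measurable_itv `[t, +oo[)).
have gfin B : measurable B -> exists r, gam B = r%:E.
  move=> mB; exists (fine (gam B)); rewrite fineK // ge0_fin_numE //.
  apply: (@le_lt_trans _ _ ((1 - eps)%:E)); last exact: ltry.
  rewrite -gT; apply: le_measure; rewrite ?inE //; exact: subsetT.
have hK : (gam K <= (e / 3)%:E)%E.
  have [k hk] := gfin K mK.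
  have : ((t `^ p)%:E * gam K <= ((e / 3) * t `^ p)%:E)%E.
    rewrite -integral_cst //; apply: le_trans hint.
    apply: (@le_trans _ _ (\int[gam]_(z in K) ((c z.1 z.2) `^ p)%:E)%E).
      apply: ge0_le_integral => //.
      - by move=> z _; rewrite lee_fin powR_ge0.
      - exact: measurable_funTS (mcp hc p).
      - move=> z /= Kz; rewrite lee_fin; apply: ge0_ler_powR; rewrite ?nnegrE //.
        + exact: ltW.
        + exact: ltW.
        + exact: c_ge0 hc _ _.
    apply: ge0_subset_integral => //.
    - exact: mcp hc p.
    - by move=> z _; rewrite lee_fin powR_ge0.
  rewrite hk -EFinM lee_fin mulrC => h.
  by rewrite lee_fin -(ler_pM2r tp0).
pose Ft : set (BX c) := nbh F t.
have mFt : measurable Ft by apply: open_meas; exact: nbh_open.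
have mCF : measurable (~` F : set (BX c)) by exact: measurableC.
pose S1 : set (BXX c) := (~` F) `*` setT.
pose S2 : set (BXX c) := setT `*` Ft.
have m1 : measurable S1.
  rewrite /S1 (_ : _ `*` _ = fst @^-1` (~` F)); last first.
    by apply/seteqP; split => -[x y] //= [].
  by rewrite -[X in measurable X]setTI; apply: (@mfst _ _ c measurableT); exact: mCF.
have m2 : measurable S2.
  rewrite /S2 (_ : _ `*` _ = snd @^-1` Ft); last first.
    by apply/seteqP; split => -[x y] //= [].
  by rewrite -[X in measurable X]setTI; apply: (@msnd _ _ c measurableT); exact: mFt.
have ha1 : ((1 - eps)%:E <= gam S1 + gam S2 + gam K)%E.
  rewrite -gT.
  apply: (@le_trans _ _ (gam ((S1 `|` S2) `|` K))).
    apply: le_measure; rewrite ?inE //; first by apply: measurableU => //; exact: measurableU.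
    move=> [x y] _.
    case: (pselect (F x)) => Fx; last by left; left.
    case: (ltP (c x y) t) => hxy; last by right.
    by left; right; split => //=; exists x.
  apply: le_trans (@measureU2 _ _ _ gam _ _ (measurableU _ _ m1 m2) mK) _.
  by apply: leeD => //; exact: (@measureU2 _ _ _ gam _ _ m1 m2).
have hb1 : (gam S1 <= mu (~` F))%E := gfst _ mCF.
have hc1 : (gam S2 <= nu Ft)%E := gsnd _ mFt.
have hFt : nu Ft = (nu F + nu (G n))%E.
  rewrite -measureU //; last by rewrite /G setDE setICA setICr setI0.
  by rewrite /G setDUK // => x Fx; exists x => //; rewrite c0.
have hnF : (nu F <= nu A)%E by apply: le_measure; rewrite ?inE.
have hmT : mu setT = (mu F + mu (~` F))%E.
  by rewrite -measureU ?setICr // setUv.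
have hmA : mu A = (mu F + mu (A `\` F))%E.
  by rewrite -measureU //; [rewrite setDUK|apply: measurableD|rewrite setDE setICA setICr setI0].
have fm (m : probability (BX c) R) B : measurable B -> exists r, m B = r%:E.
  by move=> mB; exists (fine (m B)); rewrite fineK // fin_num_measure.
have [a ha] := fm mu A mA.
have [b hb] := fm nu A mA.
have [f hf] := fm mu F mF.
have [fc hfc] := fm mu _ mCF.
have [ad had] := fm mu _ (measurableD mA mF).
have [nf hnf] := fm nu F mF.
have [nft hnft] := fm nu Ft mFt.
have [ng hng] := fm nu (G n) (mG n).
have [g1 hg1] := gfin _ m1.
have [g2 hg2] := gfin _ m2.
have [gk hgk] := gfin _ mK.
rewrite probability_setT hf hfc in hmT.
rewrite ha hf had in hmA.
rewrite hnft hnf hng in hFt.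
rewrite hnf hb in hnF.
rewrite hg1 hfc in hb1.
rewrite hg2 hnft in hc1.
rewrite hg1 hg2 hgk in ha1.
rewrite hgk in hK.
rewrite hng in hn.
rewrite had in hF.
rewrite ha hb /=.
rewrite -EFinD in hmT; have hmT' := EFin_inj hmT.
rewrite -EFinD in hmA; have hmA' := EFin_inj hmA.
rewrite -EFinD in hFt; have hFt' := EFin_inj hFt.
rewrite -!EFinD lee_fin in ha1.
rewrite lee_fin in hnF. rewrite lee_fin in hb1. rewrite lee_fin in hc1.
rewrite lee_fin in hK. rewrite lee_fin in hn. rewrite lee_fin in hF.
clear hmT hmA hFt hint hW ha hb hf hfc had hnf hnft hng hg1 hg2 hgk.
lra.
Qed.

End Lower.

Unset Implicit Arguments. Set Strict Implicit. Set Printing Implicit Defensive.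


Theorem lemma4p2 (R : realType) (X : pointedType) (c : X -> X -> R)
  (hc : is_metric c) (hdiam : forall x y, c x y <= 1)
  (mu nu : probability (BX c) R) (p : R) (hp : 1 <= p) :
  RPW c p 0 mu nu = TV c mu nu.
Proof.
have p0 : 0 < p by exact: lt_le_trans ltr01 hp.
have fm (m : probability (BX c) R) B : measurable B -> exists r, m B = r%:E.
  by move=> mB; exists (fine (m B)); rewrite fineK // fin_num_measure.
have m01 (m : probability (BX c) R) B : measurable B -> 0 <= fine (m B) <= 1.
  move=> mB; have [r hr] := fm m B mB; rewrite hr /=.
  have h1 : (0 <= m B)%E := measure_ge0 m B.
  have h2 : (m B <= 1)%E := probability_le1 m mB.
  rewrite hr in h1; rewrite hr in h2.
  by apply/andP; split; rewrite -lee_fin.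
have mC (m : probability (BX c) R) B : measurable B ->
    fine (m (~` B)) = 1 - fine (m B).
  move=> mB.
  have h : m (B `|` ~` B) = (m B + m (~` B))%E := measureU m mB (measurableC mB) (setICr B).
  rewrite setUv probability_setT in h.
  have [r hr] := fm m B mB; have [s hs] := fm m _ (measurableC mB).
  rewrite hr hs -EFinD in h; have h' := EFin_inj h.
  rewrite hr hs /=; lra.
pose S := [set eps : R | 0 <= eps <= 1 /\
  (Wpa c p (1 - eps) mu nu <= (0 * eps)%:E)%E].
pose T := [set `|fine (mu A) - fine (nu A)| | A in (@measurable _ (BX c))].
have Tub : ubound T 1.
  move=> _ [A mA <-]; have := m01 mu A mA; have := m01 nu A mA.
  move: (fine (mu A)) (fine (nu A)) => a b /andP[b0 b1] /andP[a0 a1].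
  rewrite ler_norml; apply/andP; split; lra.
have T0 : T !=set0 by exists `|fine (mu set0) - fine (nu set0)|; exists set0.
have [P [N hPN]] := Hahn_decomposition (sigc mu nu).
have [[mP posP] [mN _] PN PN0] := hPN.
pose eps0 := fine (mu P) - fine (nu P).
have eps0ge0 : 0 <= eps0.
  have : (0 <= mu P - nu P)%E := posP P mP (@subset_refl _ P).
  have [a ha] := fm mu P mP; have [b hb] := fm nu P mP.
  by rewrite /eps0 ha hb /= -EFinB lee_fin subr_ge0 -subr_ge0.
have eps0S : S eps0.
  split.
    apply/andP; split => //; have := m01 mu P mP; have := m01 nu P mP.
    rewrite /eps0; move: (fine (mu P)) (fine (nu P)) => a b /andP[b0 b1] /andP[a0 a1].
    lra.
  rewrite mul0r; apply: le_trans (ereal_inf_lbound _) _.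
    exists (gam hPN) => //.
    split.
    - rewrite gam_setT.
      have hNP : N = ~` P.
        apply/seteqP; split => x.
        + by move=> Nx Px; have : (P `&` N) x by []; rewrite PN0.
        + move=> nPx; have : (P `|` N) x by rewrite PN.
          by case.
      rewrite hNP; have [b hb] := fm nu P mP; have [a ha] := fm mu (~` P) (measurableC mP).
      rewrite hb ha /eps0 -EFinD; congr EFin.
      have := mC mu P mP; rewrite ha /= hb /= => ->; ring.
    - exact: gam_fst.
    - exact: gam_snd.
  by rewrite /wp gam_int ?gt_eqF // poweR0r // invr_neq0 // gt_eqF.
have lowS eps : S eps -> sup T <= eps.
  move=> [/andP[e0 e1] hW]; rewrite mul0r in hW.
  apply: ge_sup => // _ [A mA <-]; rewrite ler_norml; apply/andP; split.
    have := lowerA hc hp hW (measurableC mA).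
    rewrite !mC //; lra.
  exact: (lowerA hc hp (hW : (Wpa c p (1 - eps) mu nu <= 0)%E) mA).
rewrite /RPW /TV -/S -/T.
apply/eqP; rewrite eq_le; apply/andP; split.
  apply: le_trans (ge_inf _ eps0S) _.
    by exists 0 => x [/andP[]].
  apply: ub_le_sup; first by exists 1.
  by exists P => //; rewrite ger0_norm.
apply: lb_le_inf; first by exists eps0.
by move=> e; apply: lowS.
Qed.
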